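(* Let $P$ be a tree poset and $q$ a positive integer. Then $$M^*(n,q,P)\le\sum_{\mathrm{r}}\prod_{xy\in H(P)}n^{|\mathrm{r}(x)-\mathrm{r}(y)|}\cdot\binom{n}{\lfloor n/2\rfloor},$$ where the sum ranges over all poset homomorphisms $\mathrm{r}:P\to[q]$.
   Context: $\mathcal{B}_n$ is the family of subsets of $[n]$. A tree poset is a finite poset whose Hasse diagram is a tree. $M^*(n,q,P)$ is the number of induced copies of $P$ (injective maps $f$ into the family with $f(x)\subsetneq f(y)$ iff $x<_P y$) in the $q$ middle levels of $\mathcal{B}_n$, i.e. the $q$ consecutive layers $\{F:|F|=j\}$ closest to $n/2$. $H(P)$ is the directed Hasse diagram of $P$ (edge $xy$ when $y$ covers $x$). $[q]$ carries the reverse of the natural order, so a poset homomorphism $\mathrm{r}:P\to[q]$ satisfies $x<_P y\Rightarrow\mathrm{r}(x)>\mathrm{r}(y)$. *)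

(* Defs.v *)
From HB Require Import structures.
From mathcomp Require Import all_boot all_order.
Set Implicit Arguments. Unset Strict Implicit. Unset Printing Implicit Defensive.
Import Order.Theory.

Definition covers {d : Order.disp_t} {T : finPOrderType d} (x y : T) : bool :=
  ((x < y)%O && [forall z : T, ~~ ((x < z)%O && (z < y)%O)]).

Definition hasse_adj {d : Order.disp_t} {T : finPOrderType d} : rel T :=
  fun x y => covers x y || covers y x.

Definition tree_poset {d : Order.disp_t} (T : finPOrderType d) : Prop :=
  [/\ 0 < #|T|,
      (forall x y : T, connect hasse_adj x y) &
      ~ (exists c : seq T, [&& uniq c, 3 <= size c & cycle hasse_adj c])].

Definition distnat (a b : nat) : nat := (a - b) + (b - a).

(* The q middle levels of B_n: the q consecutive levels j (0 <= j <= n)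
   closest to n/2, namely (n+1-q)/2 <= j <= (n+1-q)/2 + q - 1
   (all levels if q > n + 1). *)
Definition mid_low (n q : nat) : nat := (n.+1 - q)./2.
Definition in_middle (n q : nat) (F : {set 'I_n}) : bool :=
  (mid_low n q <= #|F|) && (#|F| <= mid_low n q + q - 1).

Arguments in_middle : clear implicits.
(* M^*(n,q,P): number of induced copies of P in the q middle levels. *)
Definition Mstar (n q : nat) {d : Order.disp_t} (T : finPOrderType d) : nat :=
  #|[set f : {ffun T -> {set 'I_n}} |
      [&& injectiveb f,
          [forall x, in_middle n q (f x)] &
          [forall x, forall y, (f x \proper f y) == (x < y)%O]]]|.

(* poset homomorphism r : P -> [q], [q] carrying the reverse of the
   natural order: x <_P y -> r x > r y (here [q] = {0,...,q-1}). *)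
Definition rank_hom {d : Order.disp_t} {T : finPOrderType d} (q : nat)
  (r : {ffun T -> 'I_q}) : bool :=
  [forall x, forall y, (x < y)%O ==> (r y < r x)%N].

(* Main.v *)
Require Import Defs.
From HB Require Import structures.
From mathcomp Require Import all_boot all_order.
From mathcomp Require Import zify.

Lemma expn_mono a b m : a <= b -> a ^ m <= b ^ m.
Proof. move=> h; elim: m => // m IH; rewrite !expnS; exact: leq_mul. Qed.

Lemma ffact_le_exp n m : n ^_ m <= n ^ m.
Proof.
elim: m n => [|m IH] n; first by [].
rewrite ffactnS expnS leq_mul //; apply: leq_trans (IH _) _.
apply: expn_mono; exact: leq_pred.
Qed.

Lemma bin_le_exp n k : 'C(n, k) <= n ^ k.
Proof.
apply: leq_trans (ffact_le_exp n k); rewrite -bin_ffact.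
by rewrite leq_pmulr // fact_gt0.
Qed.

Lemma bin_step n k : k < n./2 -> 'C(n, k) <= 'C(n, k.+1).
Proof.
move=> h.
have h2 := odd_double_half n.
have hk : k.+1 <= n - k by rewrite -!muln2 in h2; lia.
rewrite -(@leq_pmul2l k.+1) // mul_bin_left leq_mul2r hk orbT //.
Qed.

Lemma bin_le_half n k : 'C(n, k) <= 'C(n, n./2).
Proof.
have up : forall m, m <= n./2 -> forall k, k <= m -> 'C(n, k) <= 'C(n, m).
  elim=> [|m IH] hm j hk; first by move: hk; rewrite leqn0 => /eqP ->.
  rewrite leq_eqVlt in hk; case/orP: hk => [/eqP -> //|hk].
  idtac.
exact: (leq_trans (IH (ltnW hm) j (ltnSE hk)) (bin_step n m hm)).
have h2 := odd_double_half n.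
case: (leqP k n./2) => hk; first exact: up.
case: (leqP k n) => hkn; last by rewrite bin_small.
rewrite -bin_sub //; apply: up => //.
rewrite -!muln2 in h2; lia.
Qed.
Section Tree.
Variables (d : Order.disp_t) (P : finPOrderType d) (x0 : P).
Hypothesis conn : forall x : P, connect hasse_adj x x0.

Definition reach (k : nat) (x : P) : bool :=
  [exists t : k.-tuple P, path hasse_adj x t && (last x t == x0)].

Lemma reach_ex x : exists k, reach k x.
Proof.
have /connectP [s ps lst] := conn x.
exists (size s); apply/existsP; exists (in_tuple s) => /=.
by rewrite ps -lst eqxx.
Qed.

Definition dep x := ex_minn (reach_ex x).

Lemma dep_reach x : reach (dep x) x.
Proof. by rewrite /dep; case: ex_minnP. Qed.

Lemma dep_min x k : reach k x -> dep x <= k.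
Proof. rewrite /dep; case: ex_minnP => m _ H; exact: H. Qed.

Lemma dep0 x : dep x = 0 -> x = x0.
Proof.
move=> H; have := dep_reach x; rewrite H => /existsP [t /andP [_ /eqP]].
by rewrite tuple0 /=.
Qed.

Definition par x : P := odflt x [pick y | hasse_adj x y && reach (dep x).-1 y].

Lemma par_spec x : x != x0 -> hasse_adj x (par x) /\ dep (par x) < dep x.
Proof.
move=> nx.
have Hd : 0 < dep x.
  rewrite lt0n; apply/negP => /eqP /dep0 /eqP; by rewrite (negbTE nx).
rewrite /par; case: pickP => [y /andP [a r] | H] /=.
  split=> //; apply: leq_ltn_trans (@dep_min _ _ r) _; by rewrite ltn_predL.
exfalso; move: H (dep_reach x) Hd; case: (dep x) => [//|k] H /existsP [t /andP [pt lt]] _.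
case/tupleP: t pt lt => y t /= /andP [a pt] lt.
have := H y; rewrite a /=; move/negbT/negP; apply.
by apply/existsP; exists t; rewrite pt lt.
Qed.

Lemma par_dep x : x != x0 -> dep (par x) < dep x.
Proof. by case/par_spec. Qed.

Lemma par_adj x : x != x0 -> hasse_adj x (par x).
Proof. by case/par_spec. Qed.

Lemma dep_ind (Q : P -> Prop) :
  Q x0 -> (forall x, x != x0 -> Q (par x) -> Q x) -> forall x, Q x.
Proof.
move=> H0 HS.
suff: forall m x, dep x <= m -> Q x by move=> H x; exact: (H _ x (leqnn _)).
elim=> [|m IH] x hx.
  by rewrite (@dep0 x) //; apply/eqP; rewrite -leqn0.
case: (eqVneq x x0) => [->//|nx]; apply: (HS _ nx); apply: IH.
have := par_dep x nx; move: hx; lia.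
Qed.

End Tree.
Lemma card_fam (P : finType) n (k : P -> nat) :
  #|[set g : {ffun P -> {set 'I_n}} | [forall x, #|g x| == k x]]| = \prod_(x : P) 'C(n, k x).
Proof.
have -> : #|[set g : {ffun P -> {set 'I_n}} | [forall x, #|g x| == k x]]| =
   #|family (fun x : P => [pred A : {set 'I_n} | #|A| == k x])|.
  apply: eq_card => g; rewrite inE; apply/forallP/familyP => /= H x; exact: H.
rewrite card_family.
have -> : forall s : seq P, foldr muln 1 [seq #|[pred A : {set 'I_n} | #|A| == k x]| | x <- s]
   = \prod_(x <- s) 'C(n, k x).
  elim=> [|a s IH] /=; first by rewrite big_nil.
  rewrite big_cons IH; congr (_ * _).
  have := (@card_draws 'I_n (k a)); rewrite card_ord => <-; apply: eq_card => A; by rewrite inE.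
by rewrite big_enum.
Qed.
Arguments par {d P x0} conn x.
Arguments dep {d P x0} conn x.
Arguments par_adj {d P x0} conn {x}.
Arguments par_dep {d P x0} conn {x}.
Arguments dep_ind {d P x0} conn Q.

Definition symd (T : finType) (A B : {set T}) := (A :\: B) :|: (B :\: A).
Arguments symd {T}.

Lemma symdK (T : finType) (A B : {set T}) : symd B (symd A B) = A.
Proof.
apply/setP => i; rewrite /symd !inE.
by case: (i \in A); case: (i \in B).
Qed.

Lemma symdC (T : finType) (A B : {set T}) : symd A B = symd B A.
Proof. by rewrite /symd setUC. Qed.

Lemma card_symd (T : finType) (A B : {set T}) :
  A \subset B -> #|symd A B| = #|B| - #|A|.
Proof.
move=> sAB; rewrite /symd.
have -> : A :\: B = set0 by apply/eqP; rewrite setD_eq0.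
by rewrite set0U cardsDS.
Qed.

Section Count.
Variables (d : Order.disp_t) (P : finPOrderType d) (x0 : P).
Hypothesis conn : forall x : P, connect hasse_adj x x0.
Variables (n q : nat).

Definition top := mid_low n q.+1 + q.+1 - 1.

Definition Mset := [set f : {ffun P -> {set 'I_n}} |
      [&& injectiveb f,
          [forall x, in_middle n q.+1 (f x)] &
          [forall x, forall y, (f x \proper f y) == (x < y)%O]]].

Lemma Mstar_Mset : Mstar n q.+1 P = #|Mset|.
Proof. by []. Qed.

Definition rk (f : {ffun P -> {set 'I_n}}) : {ffun P -> 'I_q.+1} :=
  [ffun x => inord (top - #|f x|)].

Lemma Mset_size f x : f \in Mset -> mid_low n q.+1 <= #|f x| <= top.
Proof.
rewrite inE => /and3P [_ /forallP H _]; exact: H.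
Qed.
Arguments Mset_size {f} x.

Lemma Mset_lt f x y : f \in Mset -> (x < y)%O -> f x \proper f y.
Proof.
rewrite inE => /and3P [_ _ /forallP H] lt.
by have /forallP /(_ y) /eqP -> := H x.
Qed.
Arguments Mset_lt {f x y}.

Lemma rk_val f x : f \in Mset -> rk f x = top - #|f x| :> nat.
Proof.
move=> fM; have := Mset_size x fM; rewrite /top => h.
rewrite ffunE inordK //; rewrite /top; move: h; move: (mid_low n q.+1) (#|f x|) => a b; lia.
Qed.

Lemma rk_hom f : f \in Mset -> rank_hom (rk f).
Proof.
move=> fM; apply/forallP => x; apply/forallP => y; apply/implyP => lt.
rewrite !rk_val //.
have := proper_card (Mset_lt fM lt); have := Mset_size y fM; rewrite /top; lia.
Qed.

Definition Phi (f : {ffun P -> {set 'I_n}}) :=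
  (f x0, [ffun x => if x == x0 then set0 else symd (f x) (f (par conn x))]).

Definition kk (r : {ffun P -> 'I_q.+1}) x :=
  if x == x0 then 0 else distnat (r x) (r (par conn x)).

Definition Tset (r : {ffun P -> 'I_q.+1}) :=
  setX [set A : {set 'I_n} | #|A| == top - r x0]
       [set g : {ffun P -> {set 'I_n}} | [forall x, #|g x| == kk r x]].

Lemma Phi_inj : injective Phi.
Proof.
move=> f g [e0 /ffunP e]; apply/ffunP; apply: (dep_ind conn) => // x nx IH.
have := e x; rewrite !ffunE (negbTE nx) IH => eq.
by rewrite -(symdK _ (f x) (g (par conn x))) eq symdK.
Qed.

Lemma Phi_in r f : f \in Mset -> rk f = r -> Phi f \in Tset r.
Proof.
move=> fM <-; rewrite !inE /=; apply/andP; split.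
  rewrite rk_val //; have := Mset_size x0 fM; rewrite /top => h; apply/eqP.
  move: (mid_low n q.+1) (#|f x0|) h => a b h; lia.
apply/forallP => x; rewrite ffunE /kk; case: ifP => [_|/negbT nx]; first by rewrite cards0.
rewrite !rk_val //.
have := Mset_size x fM; have := Mset_size (par conn x) fM.
have : hasse_adj x (par conn x) := par_adj conn nx.
rewrite /hasse_adj /covers /distnat /top => /orP [] /andP [lt _].
  rewrite card_symd; last exact: proper_sub (Mset_lt fM lt).
  have := proper_card (Mset_lt fM lt); move=> h1 h2 h3; apply/eqP.
  move: (mid_low n q.+1) (#|f x|) (#|f (par conn x)|) h1 h2 h3 => a b c h1 h2 h3; lia.
rewrite symdC card_symd; last exact: proper_sub (Mset_lt fM lt).
have := proper_card (Mset_lt fM lt); move=> h1 h2 h3; apply/eqP.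
  move: (mid_low n q.+1) (#|f x|) (#|f (par conn x)|) h1 h2 h3 => a b c h1 h2 h3; lia.
Qed.

Lemma card_Tset r : #|Tset r| = 'C(n, top - r x0) * \prod_(x : P) 'C(n, kk r x).
Proof.
rewrite cardsX card_fam; congr (_ * _).
have := (@card_draws 'I_n (top - r x0)); rewrite card_ord => <-.
by [].
Qed.

Lemma count_r r :
  #|[set f in Mset | rk f == r]| <= 'C(n, n./2) * \prod_(x : P) 'C(n, kk r x).
Proof.
apply: leq_trans (_ : #|Tset r| <= _).
  rewrite -(card_in_imset (f := Phi)); last by move=> f g _ _; exact: Phi_inj.
  apply: subset_leq_card; apply/subsetP => u /imsetP [f]; rewrite inE => /andP [fM /eqP rf] ->.
  exact: Phi_in.
by rewrite card_Tset leq_mul2r bin_le_half orbT.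
Qed.

End Count.

Section Edges.
Variables (d : Order.disp_t) (P : finPOrderType d) (x0 : P).
Hypothesis conn : forall x : P, connect hasse_adj x x0.
Variables (q m : nat) (r : {ffun P -> 'I_q.+1}).
Hypothesis m0 : 0 < m.

Definition phi x := if covers x (par conn x) then (x, par conn x) else (par conn x, x).

Lemma edge_bound :
  \prod_(x : P) (if x == x0 then 1 else m ^ distnat (r x) (r (par conn x))) <=
  \prod_(x : P) \prod_(y : P | covers x y) m ^ distnat (r x) (r y).
Proof.
set A := [set x : P | x != x0].
set h := fun e : P * P => m ^ distnat (r e.1) (r e.2).
have -> : \prod_(x : P) (if x == x0 then 1 else m ^ distnat (r x) (r (par conn x)))
          = \prod_(x in A) h (phi x).
  rewrite [RHS]big_mkcond; apply: eq_bigr => x _; rewrite inE /h /phi.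
  case: (x == x0) => //=; case: ifP => //= _; by rewrite /distnat addnC.
have inj : {in A &, injective phi}.
  move=> x y; rewrite !inE => nx ny.
  have dx := par_dep conn nx; have dy := par_dep conn ny.
  rewrite /phi; case: ifP => _; case: ifP => _ [] e1 e2 //.
  - first [ by rewrite e2 in dx; rewrite -e1 in dy; lia | by rewrite e1 in dx; rewrite -e2 in dy; lia ].
  - first [ by rewrite e2 in dx; rewrite -e1 in dy; lia | by rewrite e1 in dx; rewrite -e2 in dy; lia ].
rewrite -(big_imset h inj) /=.
have sub : [set phi x | x in A] \subset [set e : P * P | covers e.1 e.2].
  apply/subsetP => e /imsetP [x]; rewrite /A !inE => nx ->; rewrite /phi.
  have := par_adj conn nx; rewrite /hasse_adj.
  by case: ifP => //= _; rewrite orbF.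
rewrite pair_big_dep /=.
have -> : \prod_(p : P * P | covers p.1 p.2) m ^ distnat (r p.1) (r p.2) =
          \prod_(p in [set e : P * P | covers e.1 e.2]) h p.
  by apply: eq_bigl => e; rewrite inE.
rewrite [X in _ <= X](big_setID [set phi x | x in A]) /= (setIidPr sub).
apply: leq_pmulr; apply: prodn_gt0 => e; by rewrite expn_gt0 m0.
Qed.

End Edges.

Lemma set_I0 (A B : {set 'I_0}) : A = B.
Proof. by apply/setP => [[]]. Qed.

Theorem lemma5p4 (d : Order.disp_t) (P : finPOrderType d) (q n : nat) :
  tree_poset P -> 0 < q ->
  Mstar n q P <=
    (\sum_(r : {ffun P -> 'I_q} | rank_hom r)
        \prod_(x : P) \prod_(y : P | covers x y) n ^ distnat (r x) (r y))
    * 'C(n, n./2).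
Proof.
case=> Pne conn' _; case: q => // q _.
have [x0 _] := card_gt0P Pne.
have conn : forall x, connect hasse_adj x x0 := fun x => conn' x x0.
rewrite (Mstar_Mset d P n q) -sum1_card (partition_big (rk d P n q) (@rank_hom d P q.+1)) /=;
  last by move=> f; exact: rk_hom.
rewrite big_distrl /=; apply: leq_sum => r hr.
rewrite sum1dep_card.
case: n => [|n].
  case: (boolP [exists x : P, exists y : P, covers x y]) => [/existsP [x /existsP [y cxy]] | nc].
    suff -> : #|[set f | (f \in Mset d P 0 q) && (rk d P 0 q f == r)]| = 0 by [].
    apply/eqP; rewrite cards_eq0; apply/eqP/setP => f; rewrite !inE.
    apply/negbTE/negP => /andP [fM _].
    have lt : (x < y)%O by case/andP: cxy.
    case/and3P: fM => _ _ /forallP /(_ x) /forallP /(_ y) /eqP.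
    by rewrite (set_I0 (f x) (f y)) properxx lt.
  apply: leq_trans (@count_r d P x0 conn 0 q r) _.
  have E : \prod_(x : P) \prod_(y : P | covers x y) 0 ^ distnat (r x) (r y) = 1.
    apply: big1 => x _; apply: big1 => y cxy; exfalso; move/negP: nc; apply.
    by apply/existsP; exists x; apply/existsP; exists y.
  rewrite E.
  rewrite mul1n bin0 mul1n.
  have E1 : \prod_(x : P) 1 = 1 by apply: big1.
  rewrite -[X in _ <= X]E1.
  apply: leq_prod => x _; rewrite bin0n; by case: (_ == 0).
apply: leq_trans (@count_r d P x0 conn n.+1 q r) _.
rewrite [X in _ <= X]mulnC leq_mul2l; apply/orP; right.
apply: leq_trans (@edge_bound d P x0 conn q n.+1 r (ltn0Sn n)) => /=.
apply: leq_prod => x _; rewrite /kk; case: (x == x0); first by rewrite bin0.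
exact: bin_le_exp.
Qed.
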